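(* Let $0<q<1$, $0\le p<1$. Let $k_n(x)=q^{-n}S_n(qx;pq,q)$ (the monic kernel polynomials of $S_n(x;p,q)$), with recurrence $k_n(x)=(x-d_n)k_{n-1}(x)-\nu_nk_{n-2}(x)$, $n\ge1$, $k_{-1}=0$, $k_0=1$, and let $\beta_n=\nu_{n+1}/(d_nd_{n+1})$, $n\ge1$. Then \[ \beta_n=\frac{q(1-q^n)(1-pq^n)}{(1+q-(1+p)q^n)(1+q-(1+p)q^{n+1})},\quad n\ge1; \] the maximal and minimal parameter sequences of $(\beta_n)$ are \[ M_n=\frac{q}{1+q-(1+p)q^{n+1}}\frac{\Delta_n}{\Delta_{n+1}},\qquad m_n=\frac{q(1-q^n)}{1+q-(1+p)q^{n+1}},\quad n\ge0; \] and the sequence \[ h_n=\frac{q(1-pq^n)}{1+q-(1+p)q^{n+1}},\quad n\ge0, \] is a parameter sequence of $(\beta_n)$ whose shell polynomials $p^h_n$ are exactly the monic generalized Stieltjes–Wigert polynomials $S_n(x;p,q)$.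
   Context: $(a;q)_n=\prod_{k=1}^n(1-aq^{k-1})$ for $n\in\{0,1,\dots\}\cup\{\infty\}$, $\begin{bmatrix}n\\k\end{bmatrix}_q=\frac{(q;q)_n}{(q;q)_k(q;q)_{n-k}}$, and $\Delta_n=(pq^n;q)_\infty-(q^n;q)_\infty$. The monic generalized Stieltjes–Wigert polynomials are $S_n(x;p,q)=(-1)^nq^{-n(n+1/2)}(p;q)_n\sum_{k=0}^n\begin{bmatrix}n\\k\end{bmatrix}_q\frac{q^{k^2}(-\sqrt q x)^k}{(p;q)_k}$. A parameter sequence for a chain sequence $(\beta_n)_{n\ge1}$ is a sequence $(h_n)_{n\ge0}$ with $0\le h_0<1$, $0<h_n<1$ for $n\ge1$, and $\beta_n=h_n(1-h_{n-1})$ for $n\ge1$; the minimal parameter sequence is the one with $h_0=0$, and the maximal one is the one whose initial value $h_0$ is the largest possible. Given a parameter sequence $(h_n)$ with $h_0>0$, the shell polynomials $p^h_n$ are the monic polynomials defined by $p^h_n(x)=(x-c^h_n)p^h_{n-1}(x)-\lambda^h_np^h_{n-2}(x)$, $p^h_{-1}=0$, $p^h_0=1$, where $c_1^h=h_0d_1$, $c_{n+1}^h=(1-h_{n-1})d_n+h_nd_{n+1}$ and $\lambda_{n+1}^h=(1-h_{n-1})h_{n-1}d_n^2$ for $n\ge1$. *)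

(* Defs.v *)
From HB Require Import structures.
From mathcomp Require Import all_boot all_order all_algebra.
From mathcomp Require Import all_classical all_reals all_analysis.
Set Implicit Arguments. Unset Strict Implicit. Unset Printing Implicit Defensive.
Import Order.TTheory GRing.Theory Num.Theory numFieldNormedType.Exports.
Local Open Scope ring_scope.

Section Defs.
Variable R : realType.

Definition qpoch (a q : R) (n : nat) : R := \prod_(i < n) (1 - a * q ^+ i).

Definition qpoch_inf (a q : R) : R := limn (fun n : nat => qpoch a q n).

Definition qbin (q : R) (n k : nat) : R :=
  qpoch q q n / (qpoch q q k * qpoch q q (n - k)).

Definition Delta (p q : R) (n : nat) : R :=
  qpoch_inf (p * q ^+ n) q - qpoch_inf (q ^+ n) q.

(* monic generalized Stieltjes--Wigert polynomial S_n(x; p, q);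
   q^{-n(n+1/2)} is written q^{-n^2} * (sqrt q)^{-n} *)
Definition SW (n : nat) (p q : R) : {poly R} :=
  ((-1) ^+ n * (q ^+ (n * n))^-1 * (Num.sqrt q ^+ n)^-1 * qpoch p q n) *:
  \sum_(k < n.+1)
     (qbin q n k * q ^+ (k * k) / qpoch p q k * (- Num.sqrt q) ^+ k) *: 'X^k.

Definition kernelSW (p q : R) (n : nat) : {poly R} :=
  (q ^+ n)^-1 *: (SW n (p * q) q \Po (q *: 'X)).

Definition three_term (k : nat -> {poly R}) (d nu : nat -> R) : Prop :=
  k 0%N = 1 /\
  forall n : nat, k n.+1 =
    ('X - (d n.+1)%:P) * k n - (nu n.+1)%:P * (if n is m.+1 then k m else 0).

Definition param_seq (beta h : nat -> R) : Prop :=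
  [/\ 0 <= h 0%N < 1,
      (forall n : nat, (0 < n)%N -> 0 < h n < 1) &
      (forall n : nat, (0 < n)%N -> beta n = h n * (1 - h n.-1))].

Definition is_min_param (beta h : nat -> R) : Prop :=
  param_seq beta h /\ h 0%N = 0.

Definition is_max_param (beta h : nat -> R) : Prop :=
  param_seq beta h /\ forall g, param_seq beta g -> g 0%N <= h 0%N.

Definition shell_c (h d : nat -> R) (n : nat) : R :=
  match n with
  | 0 => 0
  | m.+1 => if m == 0%N then h 0%N * d 1%N
            else (1 - h m.-1) * d m + h m * d m.+1
  end.

Definition shell_lam (h d : nat -> R) (n : nat) : R :=
  match n with
  | 0 => 0
  | m.+1 => if m == 0%N then 0
            else (1 - h m.-1) * h m.-1 * d m ^+ 2
  end.

(* pairs (p_{n-1}, p_n), with p_{-1} = 0, p_0 = 1 *)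
Fixpoint shell_aux (h d : nat -> R) (n : nat) : {poly R} * {poly R} :=
  match n with
  | 0 => (0, 1)
  | m.+1 => let: (a, b) := shell_aux h d m in
            (b, ('X - (shell_c h d m.+1)%:P) * b - (shell_lam h d m.+1)%:P * a)
  end.

Definition shell (h d : nat -> R) (n : nat) : {poly R} := (shell_aux h d n).2.

End Defs.

(* Main.v *)
Require Import Defs.
From HB Require Import structures.
From mathcomp Require Import all_boot all_order all_algebra.
From mathcomp Require Import all_classical all_reals all_analysis.
From mathcomp Require Import ring lra zify.
Import Order.TTheory GRing.Theory Num.Theory numFieldNormedType.Exports.
Set Implicit Arguments. Unset Strict Implicit. Unset Printing Implicit Defensive.
Local Open Scope ring_scope.

Section Poly1.
Variable R : realType.
Variable q : R.
Hypothesis hq0 : 0 < q.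
Hypothesis hq1 : q < 1.

Lemma qpochS (a : R) n : qpoch a q n.+1 = qpoch a q n * (1 - a * q ^+ n).
Proof. by rewrite /qpoch big_ord_recr. Qed.

Lemma qpoch0 (a : R) : qpoch a q 0 = 1.
Proof. by rewrite /qpoch big_ord0. Qed.

Lemma qX_gt0 n : 0 < q ^+ n.
Proof. exact: exprn_gt0. Qed.

Lemma qX_le1 n : q ^+ n <= 1.
Proof. apply: exprn_ile1; [exact: ltW | exact: ltW]. Qed.

Lemma qXS_lt1 n : q ^+ n.+1 < 1.
Proof. by rewrite exprn_ilt1 // ltW. Qed.

Lemma fac_gt0 (a : R) n : 0 <= a -> a < 1 -> 0 < 1 - a * q ^+ n.
Proof.
move=> ha0 ha1; rewrite subr_gt0.
apply: (le_lt_trans _ ha1).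
by rewrite -[X in _ <= X]mulr1 ler_wpM2l // qX_le1.
Qed.

Lemma qpoch_gt0 (a : R) n : 0 <= a -> a < 1 -> 0 < qpoch a q n.
Proof. move=> ha0 ha1; apply: prodr_gt0 => i _; exact: fac_gt0. Qed.

Definition G n k := \prod_(i < k) ((1 - q ^+ (n - i)) / (1 - q ^+ i.+1)).

Lemma G0 n : G n 0 = 1.
Proof. by rewrite /G big_ord0. Qed.

Lemma G_rec n k : G n k.+1 = G n k * ((1 - q ^+ (n - k)) / (1 - q ^+ k.+1)).
Proof. by rewrite /G big_ord_recr. Qed.

Lemma G_zero n k : (n < k)%N -> G n k = 0.
Proof.
elim: k => // k IH; rewrite ltnS leq_eqVlt G_rec => /orP [/eqP <-|/IH ->].
  by rewrite subnn expr0 subrr mul0r mulr0.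
by rewrite mul0r.
Qed.

Lemma G_S m j : G m.+1 j * (1 - q ^+ (m.+1 - j)) = G m j * (1 - q ^+ m.+1).
Proof.
elim: j => [|j IH]; first by rewrite !G0 subn0.
rewrite !G_rec subSS.
have h : 1 - q ^+ j.+1 != 0 by rewrite subr_eq0 eq_sym lt_eqF // qXS_lt1.
transitivity ((G m.+1 j * (1 - q ^+ (m.+1 - j))) * ((1 - q ^+ (m - j)) / (1 - q ^+ j.+1))); first ring.
rewrite IH; ring.
Qed.

Lemma qbinE n k : (k <= n)%N -> qbin q n k = G n k.
Proof.
elim: k => [|k IH] hk.
  rewrite /qbin G0 qpoch0 mul1r subn0 divff //.
  by apply/lt0r_neq0/qpoch_gt0 => //; apply: ltW.
have hk' : (k <= n)%N by apply: ltnW.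
rewrite G_rec -IH // /qbin.
have e : (n - k = (n - k.+1).+1)%N by rewrite subnSK.
rewrite e qpochS qpochS -exprS -exprS -e.
have h1 : qpoch q q (n - k.+1) != 0.
  by apply/lt0r_neq0/qpoch_gt0 => //; apply: ltW.
have h2 : qpoch q q k != 0.
  by apply/lt0r_neq0/qpoch_gt0 => //; apply: ltW.
have h3 : 1 - q ^+ k.+1 != 0 by rewrite subr_eq0 eq_sym lt_eqF // qXS_lt1.
have h4 : 1 - q ^+ (n - k) != 0.
  by rewrite subr_eq0 eq_sym lt_eqF // e qXS_lt1.
by field; rewrite ?h1 ?h2 ?h3 ?h4.
Qed.

End Poly1.

Section Poly2.
Variable R : realType.
Variables p q : R.
Hypothesis hq0 : 0 < q.
Hypothesis hq1 : q < 1.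
Hypothesis hp0 : 0 <= p.
Hypothesis hp1 : p < 1.

Definition ee n k := G q n k * q ^+ (k * k) / qpoch p q k.
Definition KK n := (-1) ^+ n * (q ^+ (n * n))^-1 * (Num.sqrt q ^+ n)^-1 * qpoch p q n.
Definition aa n k := KK n * (ee n k * (- Num.sqrt q) ^+ k).

Lemma qpoch_neq0 n : qpoch p q n != 0.
Proof. exact/lt0r_neq0/qpoch_gt0. Qed.

Lemma SW_coef n i : (SW n p q)`_i = aa n i.
Proof.
rewrite /SW (_ : \sum_(k < n.+1) _ = \poly_(k < n.+1)
   (qbin q n k * q ^+ (k * k) / qpoch p q k * (- Num.sqrt q) ^+ k)); last first.
  by rewrite poly_def.
rewrite coefZ coef_poly /aa /ee /KK; case: ltnP => hi.
  by rewrite qbinE.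
by rewrite G_zero // !mul0r mulr0.
Qed.

Lemma ee0 n : ee n 0 = 1.
Proof. by rewrite /ee G0 qpoch0 expr0 !mul1r invr1. Qed.

Lemma ee_zero n k : (n < k)%N -> ee n k = 0.
Proof. by move=> h; rewrite /ee G_zero // !mul0r. Qed.

Lemma ee_S m j : ee m.+1 j * (1 - q ^+ (m.+1 - j)) = ee m j * (1 - q ^+ m.+1).
Proof.
rewrite /ee.
transitivity ((G q m.+1 j * (1 - q ^+ (m.+1 - j))) * (q ^+ (j * j) / qpoch p q j)); first ring.
rewrite G_S //; ring.
Qed.

Lemma ee_k m j : ee m j.+1 = ee m j * ((1 - q ^+ (m - j)) * (q * (q ^+ j) ^+ 2)
    / ((1 - q ^+ j.+1) * (1 - p * q ^+ j))).
Proof.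
rewrite /ee G_rec qpochS.
have -> : (j.+1 * j.+1 = j * j + j * 2 + 1)%N by lia.
rewrite !exprD expr1 -exprM.
have h1 : 1 - q ^+ j.+1 != 0 by rewrite subr_eq0 eq_sym lt_eqF // qXS_lt1.
have h2 : 1 - p * q ^+ j != 0 by apply/lt0r_neq0/fac_gt0.
have h3 := qpoch_neq0 j.
by field; rewrite h1 h2 h3.
Qed.


Lemma ee_rec n j : (1 - p * q ^+ n) * ee n.+1 j.+1 =
  q * (q ^+ n) ^+ 2 * ee n j + (1 + q - q ^+ n.+1 - p * q ^+ n) * ee n j.+1
  - q * (1 - q ^+ n) * ee n.-1 j.+1.
Proof.
case: (ltngtP j n) => hjn.
- have [r ->] : exists r, n = (j + r).+1 by exists (n - j.+1)%N; lia.
  rewrite /= !ee_k.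
  have e1 : ((j + r).+2 - j = r.+2)%N by lia.
  have e2 : ((j + r).+1 - j = r.+1)%N by lia.
  have e3 : ((j + r) - j = r)%N by lia.
  have S1 := ee_S (j + r).+1 j.
  have S2 := ee_S (j + r) j.
  rewrite e1 e2 e3 in S1 S2 *.
  have n1 : 1 - q ^+ r.+2 != 0 by rewrite subr_eq0 eq_sym lt_eqF // qXS_lt1.
  have n2 : 1 - q ^+ (j + r).+1 != 0 by rewrite subr_eq0 eq_sym lt_eqF // qXS_lt1.
  have n3 : 1 - q ^+ j.+1 != 0 by rewrite subr_eq0 eq_sym lt_eqF // qXS_lt1.
  have n4 : 1 - p * q ^+ j != 0 by apply/lt0r_neq0/fac_gt0.
  have n5 : 1 - p * q ^+ (j + r).+1 != 0 by apply/lt0r_neq0/fac_gt0.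
  have -> : ee (j + r).+2 j = ee (j + r).+1 j * (1 - q ^+ (j + r).+2) / (1 - q ^+ r.+2).
    by rewrite -S1; field.
  have -> : ee (j + r) j = ee (j + r).+1 j * (1 - q ^+ r.+1) / (1 - q ^+ (j + r).+1).
    by rewrite S2; field.
  move: n1 n2 n3 n4 n5.
  rewrite !exprS !exprD.
  move: (ee (j + r).+1 j) (q ^+ j) (q ^+ r) => E a b n1 n2 n3 n4 n5.
  field.
  by rewrite ?n1 ?n2 ?n3 ?n4 ?n5.
- rewrite (ee_zero (n := n.+1) (k := j.+1)) ?(ee_zero (n := n) (k := j.+1))
    ?(ee_zero (n := n) (k := j)) ?(ee_zero (n := n.-1) (k := j.+1)); try lia.
  by rewrite !mulr0 addr0 subr0.
- subst j.
  rewrite (ee_zero (n := n) (k := n.+1)) // (ee_zero (n := n.-1) (k := n.+1)); last by lia.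
  rewrite ee_k.
  have S1 := ee_S n n.
  rewrite subSn // subnn in S1 *.
  have n1 : 1 - q ^+ n.+1 != 0 by rewrite subr_eq0 eq_sym lt_eqF // qXS_lt1.
  have n4 : 1 - p * q ^+ n != 0 by apply/lt0r_neq0/fac_gt0.
  have n0 : 1 - q ^+ 1 != 0 by rewrite subr_eq0 eq_sym lt_eqF // qXS_lt1.
  have -> : ee n.+1 n = ee n n * (1 - q ^+ n.+1) / (1 - q ^+ 1) by rewrite -S1; field.
  field; by rewrite n1 n4 n0.
Qed.


Lemma sq_gt0 : 0 < Num.sqrt q.
Proof. by rewrite sqrtr_gt0. Qed.

Lemma sq2 : Num.sqrt q ^+ 2 = q.
Proof. exact/sqr_sqrtr/ltW. Qed.

Lemma KK_S n : KK n.+1 = KK n * (- (1 - p * q ^+ n) / (q * (q ^+ n) ^+ 2 * Num.sqrt q)).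
Proof.
rewrite /KK.
have -> : (n.+1 * n.+1 = n * n + n * 2 + 1)%N by lia.
rewrite !exprD expr1 -exprM !exprS qpochS.
have h1 : Num.sqrt q != 0 by apply/lt0r_neq0/sq_gt0.
have h2 : q ^+ n != 0 by apply/lt0r_neq0/qX_gt0.
have h3 : q ^+ (n * n) != 0 by apply/lt0r_neq0/qX_gt0.
have h4 : q != 0 by apply/lt0r_neq0.
have h5 : Num.sqrt q ^+ n != 0 by apply/lt0r_neq0/exprn_gt0/sq_gt0.
have h6 : q ^+ (n * 2) != 0 by apply/lt0r_neq0/qX_gt0.
by field; rewrite ?h1 ?h2 ?h3 ?h4 ?h5 ?h6.
Qed.

Definition bb n := (1 + q - q ^+ n.+1 - p * q ^+ n) / (q * (q ^+ n) ^+ 2 * Num.sqrt q).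
Definition ll n := (1 - q ^+ n) * (1 - p * q ^+ n.-1) / (q ^+ n) ^+ 4.

Lemma ee_n1 n j : ee n.+1 j.+1 = (q * (q ^+ n) ^+ 2 * ee n j
  + (1 + q - q ^+ n.+1 - p * q ^+ n) * ee n j.+1
  - q * (1 - q ^+ n) * ee n.-1 j.+1) / (1 - p * q ^+ n).
Proof.
have h : 1 - p * q ^+ n != 0 by apply/lt0r_neq0/fac_gt0.
by rewrite -ee_rec; field.
Qed.

Lemma aa_rec n i : aa n.+1 i =
  (if i is j.+1 then aa n j else 0) - bb n * aa n i - ll n * aa n.-1 i.
Proof.
have hs := sq2.
have hq : q != 0 by apply/lt0r_neq0.
case: n => [|m].
  rewrite /ll expr0 subrr !mul0r subr0 /aa KK_S /bb.
  case: i => [|j].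
    rewrite !ee0 !expr0 !mulr1; field.
    by rewrite hq /= lt0r_neq0 //= sq_gt0.
  rewrite ee_n1 /= !expr0 subrr mulr0 mul0r subr0 !exprS ?mulr1 ?mul1r.
  have h1 : 1 - p != 0 by rewrite subr_eq0 eq_sym lt_eqF.
  move: h1 (KK 0) (ee 0 j) (ee 0 j.+1) ((- Num.sqrt q) ^+ j).
  move: (Num.sqrt q) hs sq_gt0 => s hs /lt0r_neq0 hs0 h1 K E1 E2 T.
  rewrite -hs; field.
  by rewrite hs0 h1.
rewrite /aa !KK_S /bb /ll /=.
have hQ : q ^+ m != 0 by apply/lt0r_neq0/qX_gt0.
have h1 : 1 - p * (q * q ^+ m) != 0 by rewrite -exprS; apply/lt0r_neq0/fac_gt0.
case: i => [|j].
  rewrite !ee0 !expr0 !mulr1 !exprS.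
  move: h1 hQ (KK m).
  move: (q ^+ m) => Q h1 hQ K.
  move: (Num.sqrt q) hs sq_gt0 => s hs /lt0r_neq0 hs0.
  rewrite -hs; field.
  rewrite hs0 hQ /=.
  by rewrite -hs in h1; rewrite ?h1.
rewrite ee_n1 /= !exprS.
move: h1 hQ (KK m) (ee m.+1 j) (ee m.+1 j.+1) (ee m j.+1) ((- Num.sqrt q) ^+ j).
move: (q ^+ m) => Q h1 hQ K E1 E2 E3 T.
move: (Num.sqrt q) hs sq_gt0 => s hs /lt0r_neq0 hs0.
rewrite -hs; field.
rewrite hs0 hQ /=.
by rewrite -hs in h1; rewrite ?h1.
Qed.

End Poly2.

Lemma coef_rec (R : realType) (P Q : {poly R}) c l i :
  (('X - c%:P) * P - l%:P * Q)`_i = (if i is j.+1 then P`_j else 0) - c * P`_i - l * Q`_i.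
Proof. by rewrite mulrBl !coefB coefXM !coefCM; case: i. Qed.

Section Poly3.
Variable R : realType.
Variables p q : R.
Hypothesis hq0 : 0 < q.
Hypothesis hq1 : q < 1.
Hypothesis hp0 : 0 <= p.
Hypothesis hp1 : p < 1.

Lemma SW_rec n : SW n.+1 p q = ('X - (bb p q n)%:P) * SW n p q
   - (ll p q n)%:P * (if n is m.+1 then SW m p q else 0).
Proof.
have E := SW_coef p hq0 hq1.
apply/polyP => i; rewrite coef_rec E (aa_rec hq0 hq1 hp0 hp1) E.
case: n => [|m] /=.
  by rewrite coef0 /ll expr0 subrr !mul0r; case: i => [|i]; rewrite ?E.
by case: i => [|i]; rewrite !E.
Qed.

Lemma SW0 : SW 0 p q = 1.
Proof.
apply/polyP => i; rewrite SW_coef // coef1 /aa /KK.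
case: i => [|i].
  by rewrite ee0 qpoch0 !expr0 !mulr1 invr1 !mulr1.
by rewrite ee_zero // mul0r mulr0.
Qed.

End Poly3.

Section Poly4.
Variable R : realType.
Variables p q : R.
Hypothesis hq0 : 0 < q.
Hypothesis hq1 : q < 1.
Hypothesis hp0 : 0 <= p.
Hypothesis hp1 : p < 1.

Definition dd n := if n is m.+1 then bb (p * q) q m / q else 0.
Definition nn n := if n is m.+1 then ll (p * q) q m / q ^+ 2 else 0.

Lemma pq0 : 0 <= p * q.
Proof. by rewrite mulr_ge0 // ltW. Qed.

Lemma pq1 : p * q < 1.
Proof. apply: le_lt_trans hp1; rewrite ler_piMr //; exact: ltW. Qed.

Lemma kern_tt : three_term (kernelSW p q) dd nn.
Proof.
have hqn : q != 0 by apply/lt0r_neq0.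
split.
  by rewrite /kernelSW expr0 invr1 scale1r (SW0 (p * q) hq0 hq1) -polyC1 comp_polyC.
move=> n; rewrite /kernelSW (SW_rec hq0 hq1 pq0 pq1).
rewrite comp_polyB !comp_polyM comp_polyB comp_polyX !comp_polyC.
have hQ : q ^+ n != 0 by apply/lt0r_neq0/qX_gt0.
case: n hQ => [|m] hQ.
  rewrite comp_poly0 !mulr0 !subr0.
  apply/polyP => i; rewrite coefZ mulrBl -scalerAl coefB coefZ coefXM !coefCM.
  rewrite -scalerAr coefZ mulrBl coefB coefXM coefCM /dd.
  move: (bb _ _ _) (SW 0 _ _ \Po _) => b A.
  by case: i => [|i]; rewrite ?expr0 ?expr1 /=; field.
apply/polyP => i; rewrite coef_rec !coefZ mulrBl -scalerAl !coefB coefZ coefXM !coefCM.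
rewrite /dd /nn.
have hQ' : q ^+ m != 0 by apply/lt0r_neq0/qX_gt0.
move: (bb _ _ _) (ll _ _ _) (SW m.+1 _ _ \Po _) (SW m _ _ \Po _) => b l A B.
rewrite !exprS expr0 mulr1.
move: hQ'; move: (q ^+ m) => Q hQ'.
by case: i => [|i]; rewrite /= ?coefZ; field; rewrite ?hqn ?hQ'.
Qed.

End Poly4.

Lemma tt_coef (R : realType) (k : nat -> {poly R}) d nu : three_term k d nu ->
  forall n, (k n)`_n = 1 /\ forall i, (n < i)%N -> (k n)`_i = 0.
Proof.
move=> [h0 hS]; elim/ltn_ind => n IH.
case: n IH => [|m] IH.
  by rewrite h0; split => [|[|i] // _]; rewrite coef1.
have [Im1 Im2] := IH m (ltnSn m).
have Hp : forall i, (m < i)%N -> ((if m is m'.+1 then k m' else 0) : {poly R})`_i = 0.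
  case: m IH Im1 Im2 => [|m'] IH Im1 Im2 i hi; first by rewrite coef0.
  by have [_ H2] := IH m' (leqW (ltnSn m')); apply: H2; lia.
rewrite hS coef_rec; split.
  by rewrite /= Im1 Im2 // mulr0 subr0 Hp // mulr0 subr0.
case => [|i] hi //.
have h1 : (m < i)%N by lia.
have h2 : (m < i.+1)%N by lia.
by rewrite coef_rec /= (Im2 i h1) (Im2 i.+1 h2) (Hp i.+1 h2) !mulr0 !subr0.
Qed.

Lemma tt_unique_d (R : realType) (k : nat -> {poly R}) d nu d' nu' :
  three_term k d nu -> three_term k d' nu' -> forall n, d' n.+1 = d n.+1.
Proof.
move=> H H' n.
have [C1 C2] := tt_coef H n.
have Hp : ((if n is m'.+1 then k m' else 0) : {poly R})`_n = 0.
  case: n C1 C2 => [|m'] C1 C2; first by rewrite coef0.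
  by have [_ ->] := tt_coef H m'.
have e := congr1 (fun P : {poly R} => P`_n) (etrans (esym (H'.2 n)) (H.2 n)).
move: e; rewrite /= !coef_rec C1 Hp !mulr1 !mulr0 !subr0.
by move/addrI/oppr_inj.
Qed.

Lemma tt_unique_nu (R : realType) (k : nat -> {poly R}) d nu d' nu' :
  three_term k d nu -> three_term k d' nu' -> forall m, nu' m.+2 = nu m.+2.
Proof.
move=> H H' m.
have [C1 C2] := tt_coef H m.
have [D1 D2] := tt_coef H m.+1.
have e := congr1 (fun P : {poly R} => P`_m) (etrans (esym (H'.2 m.+1)) (H.2 m.+1)).
move: e; rewrite /= !coef_rec C1 !mulr1 (tt_unique_d H H').
by move/addrI/oppr_inj.
Qed.

Section Anal.
Variable R : realType.
Variable q : R.
Hypothesis hq0 : 0 < q.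
Hypothesis hq1 : q < 1.
Local Open Scope classical_set_scope.

Lemma exists_qK (eps : R) : 0 < eps -> exists K, q ^+ K < eps.
Proof.
move=> he.
have hq : `|q| < 1 by rewrite ger0_norm // ltW.
have := cvgr0_norm_lt _ (cvg_expr hq) _ he.
move=> [N _ HN]; exists N.
have := HN N (leqnn N); rewrite /= ger0_norm //; exact/ltW/qX_gt0.
Qed.

Lemma fac_ge0 (a : R) i : 0 <= a -> a <= 1 -> 0 <= 1 - a * q ^+ i.
Proof.
move=> h0 h1; rewrite subr_ge0; apply: (le_trans _ h1).
rewrite -[X in _ <= X]mulr1 ler_wpM2l // qX_le1 //.
Qed.

Lemma fac_le1 (a : R) i : 0 <= a -> 1 - a * q ^+ i <= 1.
Proof. move=> h0; rewrite lerBlDr lerDl mulr_ge0 //; exact/ltW/qX_gt0. Qed.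

Lemma qpoch_ge0 (a : R) n : 0 <= a -> a <= 1 -> 0 <= qpoch a q n.
Proof. by move=> h0 h1; apply: prodr_ge0 => i _; apply: fac_ge0. Qed.

Lemma qpoch_le1 (a : R) n : 0 <= a -> a <= 1 -> qpoch a q n <= 1.
Proof.
move=> h0 h1; elim: n => [|n IH]; first by rewrite qpoch0.
rewrite qpochS; apply: le_trans IH.
rewrite -[X in _ <= X]mulr1 ler_wpM2l ?fac_le1 //; exact: qpoch_ge0.
Qed.

Lemma qpoch_noninc (a : R) : 0 <= a -> a <= 1 ->
  {homo (qpoch a q) : n m / (n <= m)%N >-> m <= n}.
Proof.
move=> h0 h1; apply/nonincreasing_seqP => n.
rewrite qpochS -[X in _ <= X]mulr1 ler_wpM2l ?fac_le1 //; exact: qpoch_ge0.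
Qed.

Lemma qpoch_cvg (a : R) : 0 <= a -> a <= 1 -> cvgn (qpoch a q).
Proof.
move=> h0 h1; apply: nonincreasing_is_cvgn; first exact: qpoch_noninc.
by exists 0 => _ [n _ <-]; apply: qpoch_ge0.
Qed.

Lemma qpoch_lb (a : R) n : 0 <= a -> a <= 1 -> 1 - a * (1 - q ^+ n) / (1 - q) <= qpoch a q n.
Proof.
move=> h0 h1.
have hq' : 1 - q != 0 by rewrite subr_eq0 eq_sym lt_eqF.
elim: n => [|n IH]; first by rewrite qpoch0 expr0 subrr mulr0 mul0r subr0.
rewrite qpochS.
have P1 := qpoch_le1 n h0 h1.
have P0 := qpoch_ge0 n h0 h1.
have hqn : 0 <= a * q ^+ n by rewrite mulr_ge0 //; exact/ltW/qX_gt0.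
have e : 1 - a * (1 - q ^+ n.+1) / (1 - q) = 1 - a * (1 - q ^+ n) / (1 - q) - a * q ^+ n.
  by rewrite exprS; field.
rewrite e (_ : qpoch a q n * (1 - a * q ^+ n) = qpoch a q n - qpoch a q n * (a * q ^+ n)); last by ring.
apply: lerB => //.
by rewrite -[X in _ <= X]mul1r ler_wpM2r.
Qed.

Lemma qpoch_inf_ge (a : R) : 0 <= a -> a <= 1 -> 1 - a / (1 - q) <= qpoch_inf a q.
Proof.
move=> h0 h1; apply: limr_ge; first exact: qpoch_cvg.
apply: nearW => n; apply: le_trans (qpoch_lb n h0 h1).
apply: lerB => //; apply: ler_wpM2r; first by rewrite invr_ge0 subr_ge0 ltW.
apply: ler_piMr => //; rewrite lerBlDr lerDl; exact/ltW/qX_gt0.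
Qed.

Lemma qpoch_inf_le1 (a : R) : 0 <= a -> a <= 1 -> qpoch_inf a q <= 1.
Proof.
move=> h0 h1; apply: limr_le; first exact: qpoch_cvg.
by apply: nearW => n; apply: qpoch_le1.
Qed.

Lemma qpoch_inf_ge0 (a : R) : 0 <= a -> a <= 1 -> 0 <= qpoch_inf a q.
Proof.
move=> h0 h1; apply: limr_ge; first exact: qpoch_cvg.
by apply: nearW => n; apply: qpoch_ge0.
Qed.

Lemma qpoch_inf_mono (a b : R) : 0 <= a -> a <= b -> b <= 1 -> qpoch_inf b q <= qpoch_inf a q.
Proof.
move=> h0 hab h1.
have hb0 : 0 <= b by apply: le_trans hab.
have ha1 : a <= 1 by apply: le_trans h1.
apply: ler_lim; [exact: qpoch_cvg|exact: qpoch_cvg|].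
apply: nearW => n; apply: ler_prod => i _.
rewrite fac_ge0 //= lerB // ler_wpM2r //; exact/ltW/qX_gt0.
Qed.

Lemma qpoch_recl (a : R) n : qpoch a q n.+1 = (1 - a) * qpoch (a * q) q n.
Proof.
rewrite /qpoch big_ord_recl expr0 mulr1; congr (_ * _).
by apply: eq_bigr => i _; rewrite /bump /= exprS mulrA.
Qed.

Lemma qpoch_inf_rec (a : R) : 0 <= a -> a <= 1 ->
  qpoch_inf a q = (1 - a) * qpoch_inf (a * q) q.
Proof.
move=> h0 h1.
have haq0 : 0 <= a * q by rewrite mulr_ge0 // ltW.
have haq1 : a * q <= 1.
  by apply: le_trans h1; rewrite -[X in _ <= X]mulr1 ler_wpM2l // ltW.
have Hc := qpoch_cvg haq0 haq1.
apply: cvg_lim => //.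
rewrite -cvg_shiftS /=.
have -> : (fun n => qpoch a q n.+1) = (fun n => (1 - a) * qpoch (a * q) q n).
  by apply: funext => n; rewrite qpoch_recl.
exact: cvgMl_tmp.
Qed.

End Anal.

Section Delta.
Variable R : realType.
Variables p q : R.
Hypothesis hq0 : 0 < q.
Hypothesis hq1 : q < 1.
Hypothesis hp0 : 0 <= p.
Hypothesis hp1 : p < 1.

Lemma qn0 n : 0 <= q ^+ n.
Proof. exact/ltW/qX_gt0. Qed.

Lemma pqn0 n : 0 <= p * q ^+ n.
Proof. by rewrite mulr_ge0 // qn0. Qed.

Lemma pqn_le n : p * q ^+ n <= q ^+ n.
Proof. by rewrite ler_piMl ?qn0 // ltW. Qed.

Lemma pqn1 n : p * q ^+ n <= 1.
Proof. exact: le_trans (pqn_le n) (qX_le1 _ _ _). Qed.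

Lemma A_rec n : qpoch_inf (p * q ^+ n) q = (1 - p * q ^+ n) * qpoch_inf (p * q ^+ n.+1) q.
Proof. by rewrite (qpoch_inf_rec hq0 hq1 (pqn0 n) (pqn1 n)) exprSr mulrA. Qed.

Lemma B_rec n : qpoch_inf (q ^+ n) q = (1 - q ^+ n) * qpoch_inf (q ^+ n.+1) q.
Proof. by rewrite (qpoch_inf_rec hq0 hq1 (qn0 n) (qX_le1 _ _ _)) ?exprSr //; exact: ltW. Qed.

Lemma qpoch_inf_iter (a : R) K : 0 <= a -> a <= 1 ->
  qpoch_inf a q = qpoch a q K * qpoch_inf (a * q ^+ K) q.
Proof.
move=> h0 h1; elim: K => [|K IH]; first by rewrite qpoch0 expr0 mulr1 mul1r.
have h0' : 0 <= a * q ^+ K by rewrite mulr_ge0 // qn0.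
have h1' : a * q ^+ K <= 1.
  by apply: le_trans h1; rewrite -[X in _ <= X]mulr1 ler_wpM2l // qX_le1 // ltW.
rewrite IH (qpoch_inf_rec hq0 hq1 h0' h1') qpochS exprSr mulrA.
by rewrite mulrA.
Qed.

Lemma qpoch_inf_gt0 (a : R) : 0 <= a -> a < 1 -> 0 < qpoch_inf a q.
Proof.
move=> h0 h1.
have hq' : 0 < 1 - q by rewrite subr_gt0.
have [K HK] := exists_qK hq0 hq1 hq'.
rewrite (qpoch_inf_iter K h0 (ltW h1)).
apply: mulr_gt0; first exact: qpoch_gt0.
have h0' : 0 <= a * q ^+ K by rewrite mulr_ge0 // qn0.
have hle : a * q ^+ K <= q ^+ K by rewrite ler_piMl ?qn0 // ltW.
have h1' : a * q ^+ K <= 1 by apply: le_trans hle (qX_le1 _ _ _) => //; exact: ltW.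
apply: lt_le_trans (qpoch_inf_ge hq0 hq1 h0' h1').
rewrite subr_gt0 ltr_pdivrMr // mul1r.
exact: le_lt_trans hle HK.
Qed.


Lemma A_gt0 n : 0 < qpoch_inf (p * q ^+ n) q.
Proof.
apply: qpoch_inf_gt0 (pqn0 n) _; apply: le_lt_trans hp1.
by rewrite ler_piMr // qX_le1 // ltW.
Qed.

Lemma Delta_gt0 n : 0 < Delta p q n.
Proof.
rewrite /Delta A_rec B_rec.
have hB : qpoch_inf (q ^+ n.+1) q <= qpoch_inf (p * q ^+ n.+1) q.
  exact: (qpoch_inf_mono hq0 hq1 (pqn0 _) (pqn_le _) (qX_le1 hq0 hq1 _)).
have hA := A_gt0 n.+1.
have h1 : 0 <= 1 - q ^+ n by rewrite subr_ge0 qX_le1 // ltW.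
have h2 : 0 < (1 - p) * q ^+ n by rewrite mulr_gt0 ?subr_gt0 ?qX_gt0.
apply: lt_le_trans (_ : 0 < (1 - p) * q ^+ n * qpoch_inf (p * q ^+ n.+1) q) _.
  exact: mulr_gt0.
rewrite (_ : (1 - p) * q ^+ n * _ = (1 - p * q ^+ n) * qpoch_inf (p * q ^+ n.+1) q
   - (1 - q ^+ n) * qpoch_inf (p * q ^+ n.+1) q); last by ring.
by apply: lerB => //; apply: ler_wpM2l.
Qed.

Lemma Delta_le n : Delta p q n <= q ^+ n / (1 - q).
Proof.
rewrite /Delta.
have hA := qpoch_inf_le1 hq0 hq1 (pqn0 n) (pqn1 n).
have hB := qpoch_inf_ge hq0 hq1 (qn0 n) (qX_le1 hq0 hq1 n).
lra.
Qed.

Lemma Delta_rec n : (1 + q - (1 + p) * q ^+ n.+1) * Delta p q n.+1 - q * Delta p q n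
  = (1 - q ^+ n.+1) * (1 - p * q ^+ n.+1) * Delta p q n.+2.
Proof.
rewrite /Delta (A_rec n) (B_rec n) (A_rec n.+1) (B_rec n.+1) !exprS.
ring.
Qed.

End Delta.

Section Chain.
Variable R : realType.

Definition XP (g : nat -> R) n := \prod_(k < n) (1 - g k).

Lemma XP0 g : XP g 0 = 1.
Proof. by rewrite /XP big_ord0. Qed.

Lemma XPS g n : XP g n.+1 = XP g n * (1 - g n).
Proof. by rewrite /XP big_ord_recr. Qed.

Lemma XP_rec beta g : param_seq beta g -> forall n, XP g n.+2 = XP g n.+1 - beta n.+1 * XP g n.
Proof.
move=> [_ _ hb] n; rewrite !XPS (hb n.+1) //=; ring.
Qed.

Lemma XP_gt0 beta g : param_seq beta g -> forall n, 0 < XP g n.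
Proof.
move=> [/andP [_ h0] h1 _] n; apply: prodr_gt0 => -[[|k] hk] _ /=.
  by rewrite subr_gt0.
by have /andP [_ hk1] := h1 k.+1 (ltn0Sn k); rewrite subr_gt0.
Qed.

Lemma lin_comb beta g m M : param_seq beta g -> param_seq beta m -> m 0%N = 0 ->
  param_seq beta M ->
  forall n, M 0%N * XP g n = (M 0%N - g 0%N) * XP m n + g 0%N * XP M n.
Proof.
move=> Hg Hm hm0 HM.
suff H : forall n, M 0%N * XP g n = (M 0%N - g 0%N) * XP m n + g 0%N * XP M n /\
   M 0%N * XP g n.+1 = (M 0%N - g 0%N) * XP m n.+1 + g 0%N * XP M n.+1.
  by move=> n; case: (H n).
elim => [|n [e1 e2]].
  by rewrite !XPS !XP0 hm0; split; ring.
split => //.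
rewrite (XP_rec Hg) (XP_rec Hm) (XP_rec HM).
transitivity (M 0%N * XP g n.+1 - beta n.+1 * (M 0%N * XP g n)); first ring.
by rewrite e1 e2; ring.
Qed.

Lemma max_crit beta g m M : param_seq beta g -> param_seq beta m -> m 0%N = 0 ->
  param_seq beta M -> 0 < M 0%N ->
  (forall e, 0 < e -> exists n, XP M n < e * XP m n) -> g 0%N <= M 0%N.
Proof.
move=> Hg Hm hm0 HM hM0 Hs.
case: (leP (g 0%N) (M 0%N)) => // hlt.
have hg0 : 0 < g 0%N by apply: lt_trans hlt.
have he : 0 < (g 0%N - M 0%N) / g 0%N by rewrite divr_gt0 // subr_gt0.
have [n Hn] := Hs _ he.
have L := lin_comb Hg Hm hm0 HM n.
have Xg := XP_gt0 Hg n.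
have Xm := XP_gt0 Hm n.
have P1 : 0 < M 0%N * XP g n by apply: mulr_gt0.
have P2 : g 0%N * XP M n < g 0%N * ((g 0%N - M 0%N) / g 0%N * XP m n).
  by rewrite ltr_pM2l.
have E : g 0%N * ((g 0%N - M 0%N) / g 0%N * XP m n) = (g 0%N - M 0%N) * XP m n.
  by field; apply/lt0r_neq0.
rewrite E in P2.
have F : (M 0%N - g 0%N) * XP m n = - ((g 0%N - M 0%N) * XP m n) by ring.
rewrite F in L.
move: P1 P2 L; move: (M 0%N * XP g n) (g 0%N * XP M n) ((g 0%N - M 0%N) * XP m n) => a b c.
lra.
Qed.

End Chain.

Section Final.
Variable R : realType.
Variables p q : R.
Hypothesis hq0 : 0 < q.
Hypothesis hq1 : q < 1.
Hypothesis hp0 : 0 <= p.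
Hypothesis hp1 : p < 1.

Definition cc n := 1 + q - (1 + p) * q ^+ n.+1.

Lemma cc_gt0 n : 0 < cc n.
Proof.
rewrite /cc.
have hX : q ^+ n.+1 <= q by rewrite exprS ler_piMr // ?qX_le1 // ltW.
have h1 : (1 + p) * q ^+ n.+1 <= (1 + p) * q by rewrite ler_wpM2l // addr_ge0.
have h2 : p * q < 1 by apply: le_lt_trans hp1; rewrite ler_piMr // ltW.
move: h1 h2; move: (q ^+ n.+1) => X; nra.
Qed.

Lemma cc_neq0 n : cc n != 0.
Proof. exact/lt0r_neq0/cc_gt0. Qed.

Definition betaE n := q * (1 - q ^+ n) * (1 - p * q ^+ n) /
                  ((1 + q - (1 + p) * q ^+ n) * (1 + q - (1 + p) * q ^+ n.+1)).

Lemma beta_val d nu : three_term (kernelSW p q) d nu ->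
  forall n, (0 < n)%N -> nu n.+1 / (d n * d n.+1) = betaE n.
Proof.
move=> H [|k] // _.
have T := kern_tt hq0 hq1 hp0 hp1.
rewrite (tt_unique_d T H) (tt_unique_d T H) (tt_unique_nu T H).
rewrite /dd /nn /bb /ll /betaE /=.
have c1 := cc_neq0 k. have c2 := cc_neq0 k.+1.
rewrite /cc in c1 c2.
have hQ : q ^+ k != 0 by apply/lt0r_neq0/qX_gt0.
rewrite !exprS in c1 c2 *.
move: c1 c2 hQ; move: (q ^+ k) => Q c1 c2 hQ.
have hs := sq2 hq0.
move: (Num.sqrt q) hs (sq_gt0 hq0) => s hs /lt0r_neq0 hs0.
rewrite -hs in c1 c2 *.
field.
by rewrite c1 c2 hs0 hQ.
Qed.

Definition hseq n := q * (1 - p * q ^+ n) / (1 + q - (1 + p) * q ^+ n.+1).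
Definition mseq n := q * (1 - q ^+ n) / (1 + q - (1 + p) * q ^+ n.+1).
Definition Mseq n := q / (1 + q - (1 + p) * q ^+ n.+1) * (Delta p q n / Delta p q n.+1).

Lemma shell_SW d nu : three_term (kernelSW p q) d nu ->
  forall n, shell hseq d n = SW n p q.
Proof.
move=> H.
have T := kern_tt hq0 hq1 hp0 hp1.
have Hd : forall k, d k.+1 = dd p q k.+1 by move=> k; rewrite (tt_unique_d T H).
suff S : forall n, shell_aux hseq d n = ((if n is m.+1 then SW m p q else 0), SW n p q).
  by move=> n; rewrite /shell S.
have hs := sq2 hq0.
elim => [|n IH]; first by rewrite /= (SW0 p hq0 hq1).
rewrite /= IH (SW_rec hq0 hq1 hp0 hp1); congr (_, _).
case: n IH => [|k] IH.
  rewrite /= !mulr0 subr0 /shell_c /= subr0 Hd /hseq /dd /bb.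
  congr (('X - _%:P) * _).
  have c1 := cc_neq0 0; rewrite /cc in c1.
  rewrite !expr0 !expr1 !mulr1 in c1 *.
  move: c1 (Num.sqrt q) hs (sq_gt0 hq0) => c1 s hs /lt0r_neq0 hs0.
  rewrite -hs in c1 *; field.
  by rewrite c1 hs0.
rewrite /shell_c /shell_lam /= !Hd /hseq /dd /bb /ll /=.
congr (_ * _ - (_)%:P * _).
  congr (_ - _%:P).
  have c1 := cc_neq0 k. have c2 := cc_neq0 k.+1.
  rewrite /cc in c1 c2.
  have hQ : q ^+ k != 0 by apply/lt0r_neq0/qX_gt0.
  rewrite !exprS in c1 c2 *.
  move: c1 c2 hQ; move: (q ^+ k) => Q c1 c2 hQ.
  move: (Num.sqrt q) hs (sq_gt0 hq0) => s hs /lt0r_neq0 hs0.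
  rewrite -hs in c1 c2 *.
  field.
  by rewrite ?c1 ?c2 ?hs0 ?hQ.
have c1 := cc_neq0 k.
rewrite /cc in c1.
have hQ : q ^+ k != 0 by apply/lt0r_neq0/qX_gt0.
rewrite !exprS in c1 *.
move: c1 hQ; move: (q ^+ k) => Q c1 hQ.
move: (Num.sqrt q) hs (sq_gt0 hq0) => s hs /lt0r_neq0 hs0.
rewrite -hs in c1 *.
field.
by rewrite ?c1 ?hs0 ?hQ.
Qed.



Lemma Delta_neq0 n : Delta p q n != 0.
Proof. exact/lt0r_neq0/(Delta_gt0 hq0 hq1 hp0 hp1). Qed.

Lemma oneM n : (1 - Mseq n) * Delta p q n.+1 = (1 - mseq n) * (1 - q ^+ n.+1) * Delta p q n.+2.
Proof.
have e := Delta_rec hq0 hq1 hp0 hp1 n.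
have hqn : q != 0 by apply/lt0r_neq0.
have eD : Delta p q n = ((1 + q - (1 + p) * q ^+ n.+1) * Delta p q n.+1
   - (1 - q ^+ n.+1) * (1 - p * q ^+ n.+1) * Delta p q n.+2) / q.
  by rewrite -e; field.
rewrite /Mseq /mseq eD.
have c1 := cc_neq0 n; rewrite /cc in c1.
have d1 := Delta_neq0 n.+1.
rewrite exprS in c1 *.
move: c1 d1; move: (Delta p q n.+1) (Delta p q n.+2) (q ^+ n) => D1 D2 X c1 d1.
field.
by rewrite ?c1 ?d1 ?hqn.
Qed.


Lemma onem n : 1 - mseq n = (1 - p * q ^+ n.+1) / cc n.
Proof.
have c1 := cc_neq0 n; rewrite /mseq; rewrite /cc in c1 *.
rewrite exprS in c1 *; move: c1; move: (q ^+ n) => X c1.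
by field.
Qed.

Lemma oneh n : 1 - hseq n = (1 - q ^+ n.+1) / cc n.
Proof.
have c1 := cc_neq0 n; rewrite /hseq; rewrite /cc in c1 *.
rewrite exprS in c1 *; move: c1; move: (q ^+ n) => X c1.
by field.
Qed.

Lemma onem_gt0 n : 0 < 1 - mseq n.
Proof.
rewrite onem divr_gt0 ?cc_gt0 //; apply: fac_gt0 => //.
Qed.

Lemma oneh_gt0 n : 0 < 1 - hseq n.
Proof. by rewrite oneh divr_gt0 ?cc_gt0 // subr_gt0 qXS_lt1. Qed.

Lemma oneM_gt0 n : 0 < 1 - Mseq n.
Proof.
have d1 := Delta_gt0 hq0 hq1 hp0 hp1 n.+1.
rewrite -(pmulr_lgt0 _ d1) oneM.
apply: mulr_gt0; last exact: Delta_gt0.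
by apply: mulr_gt0; [exact: onem_gt0 | rewrite subr_gt0 qXS_lt1].
Qed.

Lemma M_gt0 n : 0 < Mseq n.
Proof.
apply: mulr_gt0; first by rewrite divr_gt0 // (cc_gt0 n).
by rewrite divr_gt0 // Delta_gt0.
Qed.

Lemma h_gt0 n : 0 < hseq n.
Proof.
rewrite /hseq divr_gt0 ?mulr_gt0 // ?(cc_gt0 n) //.
by apply: fac_gt0.
Qed.

Lemma m_gt0 n : (0 < n)%N -> 0 < mseq n.
Proof.
case: n => // n _; rewrite /mseq divr_gt0 ?mulr_gt0 // ?(cc_gt0 n.+1) //.
by rewrite subr_gt0 qXS_lt1.
Qed.

Lemma betaE_h k : betaE k.+1 = hseq k.+1 * (1 - hseq k).
Proof.
rewrite oneh /betaE /hseq /cc.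
have c1 := cc_neq0 k; have c2 := cc_neq0 k.+1; rewrite /cc in c1 c2.
rewrite !exprS in c1 c2 *; move: c1 c2; move: (q ^+ k) => X c1 c2.
by field; rewrite ?c1 ?c2.
Qed.

Lemma betaE_m k : betaE k.+1 = mseq k.+1 * (1 - mseq k).
Proof.
rewrite onem /betaE /mseq /cc.
have c1 := cc_neq0 k; have c2 := cc_neq0 k.+1; rewrite /cc in c1 c2.
rewrite !exprS in c1 c2 *; move: c1 c2; move: (q ^+ k) => X c1 c2.
by field; rewrite ?c1 ?c2.
Qed.

Lemma betaE_M k : betaE k.+1 = Mseq k.+1 * (1 - Mseq k).
Proof.
have d1 := Delta_neq0 k.+1; have d2 := Delta_neq0 k.+2.
have -> : 1 - Mseq k = (1 - mseq k) * (1 - q ^+ k.+1) * Delta p q k.+2 / Delta p q k.+1.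
  by rewrite -oneM; field.
rewrite onem /betaE /Mseq /cc.
have c1 := cc_neq0 k; have c2 := cc_neq0 k.+1; rewrite /cc in c1 c2.
rewrite !exprS in c1 c2 *; move: c1 c2 d1 d2; move: (q ^+ k) (Delta p q k.+1) (Delta p q k.+2)
  => X D1 D2 c1 c2 d1 d2.
by field; rewrite ?c1 ?c2 ?d1 ?d2.
Qed.

End Final.

Section Final2.
Variable R : realType.
Variables p q : R.
Hypothesis hq0 : 0 < q.
Hypothesis hq1 : q < 1.
Hypothesis hp0 : 0 <= p.
Hypothesis hp1 : p < 1.

Lemma XP_bound n : XP (Mseq p q) n * Delta p q 1 <= XP (mseq p q) n * Delta p q n.+1.
Proof.
elim: n => [|n IH]; first by rewrite !XP0.
rewrite !XPS.
have hM := oneM_gt0 hq0 hq1 hp0 hp1 n.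
apply: le_trans (_ : XP (mseq p q) n * Delta p q n.+1 * (1 - Mseq p q n) <= _).
  rewrite mulrAC; apply: ler_wpM2r => //; exact: ltW.
rewrite -mulrA [Delta p q n.+1 * _]mulrC (oneM hq0 hq1 hp0 hp1) !mulrA.
have hX : 0 <= XP (mseq p q) n * (1 - mseq p q n) * Delta p q n.+2.
  apply: mulr_ge0; last exact/ltW/(Delta_gt0 hq0 hq1 hp0 hp1).
  apply: mulr_ge0; last exact/ltW/(onem_gt0 hq0 hq1 hp0 hp1).
  by apply/prodr_ge0 => i _; apply/ltW/(onem_gt0 hq0 hq1 hp0 hp1).
rewrite mulrAC; apply: ler_piMr => //.
by rewrite lerBlDr lerDl; apply/ltW/qX_gt0.
Qed.

Lemma XPm_gt0 n : 0 < XP (mseq p q) n.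
Proof. by apply: prodr_gt0 => i _; apply: (onem_gt0 hq0 hq1 hp0 hp1). Qed.

Lemma small e : 0 < e -> exists n, XP (Mseq p q) n < e * XP (mseq p q) n.
Proof.
move=> he.
have d1 := Delta_gt0 hq0 hq1 hp0 hp1 1.
have hq' : 0 < 1 - q by rewrite subr_gt0.
have he' : 0 < e * Delta p q 1 * (1 - q) by rewrite !mulr_gt0.
have [K HK] := exists_qK hq0 hq1 he'.
exists K.
have B := XP_bound K.
have DL := Delta_le hq0 hq1 hp0 hp1 K.+1.
have Xm := XPm_gt0 K.
have hK1 : q ^+ K.+1 <= q ^+ K by rewrite exprS ler_piMl ?qn0 // ltW.
rewrite -(ltr_pM2r d1).
apply: le_lt_trans B _.
rewrite (mulrC e) -mulrA ltr_pM2l //.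
apply: le_lt_trans DL _.
rewrite ltr_pdivrMr //.
apply: le_lt_trans hK1 _; lra.
Qed.

End Final2.

Unset Implicit Arguments.

Theorem theorem6 (R : realType) (p q : R)
  (hq0 : 0 < q) (hq1 : q < 1) (hp0 : 0 <= p) (hp1 : p < 1) :
  (exists d nu : nat -> R, three_term (kernelSW p q) d nu) /\
  forall d nu : nat -> R, three_term (kernelSW p q) d nu ->
  let beta := fun n : nat => nu n.+1 / (d n * d n.+1) in
  [/\ (forall n : nat, (0 < n)%N ->
         beta n = q * (1 - q ^+ n) * (1 - p * q ^+ n) /
                  ((1 + q - (1 + p) * q ^+ n) * (1 + q - (1 + p) * q ^+ n.+1))),
      is_max_param beta
        (fun n : nat => q / (1 + q - (1 + p) * q ^+ n.+1) *
                        (Delta p q n / Delta p q n.+1)),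
      is_min_param beta
        (fun n : nat => q * (1 - q ^+ n) / (1 + q - (1 + p) * q ^+ n.+1)),
      param_seq beta
        (fun n : nat => q * (1 - p * q ^+ n) / (1 + q - (1 + p) * q ^+ n.+1)) &
      forall n : nat,
        shell (fun n : nat => q * (1 - p * q ^+ n) / (1 + q - (1 + p) * q ^+ n.+1))
              d n = SW n p q].
Proof.
split; first by exists (dd p q), (nn p q); exact: kern_tt.
move=> d nu H beta.
have Hb : forall n, (0 < n)%N -> beta n = betaE p q n.
  by move=> n hn; rewrite /beta (beta_val hq0 hq1 hp0 hp1 H).
have Pm : param_seq beta (mseq p q).
  split.
  - by rewrite /mseq expr0 subrr mulr0 mul0r lexx /= ltr01.
  - by move=> n hn; rewrite m_gt0 //= -subr_gt0 (onem_gt0 hq0 hq1 hp0 hp1).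
  - by move=> [|k] // _; rewrite Hb // (betaE_m hq0 hq1 hp0 hp1).
have PM : param_seq beta (Mseq p q).
  split.
  - by rewrite ltW ?M_gt0 //= -subr_gt0 (oneM_gt0 hq0 hq1 hp0 hp1).
  - by move=> n hn; rewrite M_gt0 //= -subr_gt0 (oneM_gt0 hq0 hq1 hp0 hp1).
  - by move=> [|k] // _; rewrite Hb // (betaE_M hq0 hq1 hp0 hp1).
have Ph : param_seq beta (hseq p q).
  split.
  - by rewrite ltW ?h_gt0 //= -subr_gt0 (oneh_gt0 hq0 hq1 hp0 hp1).
  - by move=> n hn; rewrite h_gt0 //= -subr_gt0 (oneh_gt0 hq0 hq1 hp0 hp1).
  - by move=> [|k] // _; rewrite Hb // (betaE_h hq0 hq1 hp0 hp1).
split.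
- exact: Hb.
- split; first exact: PM.
  move=> g Hg; apply: (max_crit Hg Pm _ PM).
  + by rewrite /mseq expr0 subrr mulr0 mul0r.
  + exact: M_gt0.
  + exact: small.
- split; first exact: Pm.
  by rewrite expr0 subrr mulr0 mul0r.
- exact: Ph.
- exact: (shell_SW hq0 hq1 hp0 hp1 H).
Qed.
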